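(* Let $c>0$ and $\lambda_1\le\lambda_2\le\dots\le\lambda_n$ be in $[0,1]$. The problem $\min_{w\in\Delta_n}\big(\|w\|_2^2+c(w^\top\lambda)^2\big)$ has a unique minimizer $w^*$, and it is given as follows. For $k\in[n]$ write $S_1(k)=\sum_{i\le k}\lambda_i$, $S_2(k)=\sum_{i\le k}\lambda_i^2$, and $\rho(k)=\frac{1+cS_2(k)}{cS_1(k)}$ (with $\rho(k)=+\infty$ if $S_1(k)=0$). Let $m$ be the largest $k\in[n]$ such that $\lambda_{j+1}<\rho(j)$ for all $1\le j<k$ (i.e., start from $k=1$ and increase $k$ while $k<n$ and $\lambda_{k+1}<\rho(k)$). Set \[ \beta=\frac{1+cS_2(m)}{m(1+cS_2(m))-cS_1(m)^2},\qquad \alpha=\frac{cS_1(m)\,\beta}{1+cS_2(m)}. \] Then $w^*_i=\beta-\alpha\lambda_i$ for $i\le m$ and $w^*_i=0$ for $i>m$. Moreover $w^*_i=(\beta'-c(w^{*\top}\lambda)\lambda_i)_+$ for all $i$ and a suitable scalar $\beta'$.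
   Context: $\Delta_n=\{w\in\mathbb R^n:w_i\ge0,\ \sum_iw_i=1\}$; $(x)_+=\max\{x,0\}$. *)

(* Defs.v *)
From HB Require Import structures.
From mathcomp Require Import all_boot all_order all_algebra.
Set Implicit Arguments. Unset Strict Implicit. Unset Printing Implicit Defensive.
Import Order.TTheory GRing.Theory Num.Theory.
Local Open Scope ring_scope.

Section Defs.
Variables (R : realFieldType) (n : nat).

Definition in_simplex (w : 'I_n -> R) : Prop :=
  (forall i, 0 <= w i) /\ \sum_(i < n) w i = 1.

Definition dotp (w v : 'I_n -> R) : R := \sum_(i < n) w i * v i.

Definition objective (c : R) (lam w : 'I_n -> R) : R :=
  \sum_(i < n) w i ^+ 2 + c * (dotp w lam) ^+ 2.

(* S_1(k), S_2(k): sums over the first k (1-based i <= k, i.e. 0-based i < k) *)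
Definition S1 (lam : 'I_n -> R) (k : nat) : R := \sum_(i < n | (i < k)%N) lam i.
Definition S2 (lam : 'I_n -> R) (k : nat) : R := \sum_(i < n | (i < k)%N) lam i ^+ 2.

(* "x < rho(k)" with rho(k) = (1 + c S2(k)) / (c S1(k)), and rho(k) = +oo if S1(k)=0 *)
Definition lt_rho (c : R) (lam : 'I_n -> R) (x : R) (k : nat) : bool :=
  if S1 lam k == 0 then true else x < (1 + c * S2 lam k) / (c * S1 lam k).

(* the condition on k in [n]: lambda_{j+1} < rho(j) for all 1 <= j < k.
   With 0-based indexing, lambda_{j+1} (1-based) is lam j for j : 'I_n. *)
Definition m_ok (c : R) (lam : 'I_n -> R) (k : nat) : bool :=
  [forall j : 'I_n, ((0 < j)%N && (j < k)%N) ==> lt_rho c lam (lam j) j].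

Definition m_star (c : R) (lam : 'I_n -> R) : nat :=
  \max_(k < n.+1 | (0 < k)%N && m_ok c lam k) k.

Definition beta_star (c : R) (lam : 'I_n -> R) : R :=
  let m := m_star c lam in
  (1 + c * S2 lam m) / (m%:R * (1 + c * S2 lam m) - c * S1 lam m ^+ 2).

Definition alpha_star (c : R) (lam : 'I_n -> R) : R :=
  let m := m_star c lam in
  c * S1 lam m * beta_star c lam / (1 + c * S2 lam m).

Definition w_star (c : R) (lam : 'I_n -> R) : 'I_n -> R :=
  fun i => if (i < m_star c lam)%N then beta_star c lam - alpha_star c lam * lam i else 0.

End Defs.

(* Main.v *)
Require Import Defs.
From HB Require Import structures.
From mathcomp Require Import all_boot all_order all_algebra.
From mathcomp Require Import ring lra.
From Stdlib Require Import FunctionalExtensionality.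
Import Order.TTheory GRing.Theory Num.Theory.
Local Open Scope ring_scope.

Lemma sum_step (R : realFieldType) (n : nat) (F : 'I_n -> R) (j : 'I_n) :
  \sum_(i < n | (i < j.+1)%N) F i = \sum_(i < n | (i < j)%N) F i + F j.
Proof.
rewrite (bigD1 j) //= addrC; congr (_ + _); apply: eq_bigl => i.
by rewrite ltnS ltn_neqAle andbC.
Qed.

Lemma sum_cnt (R : realFieldType) (n m : nat) : (m <= n)%N ->
  \sum_(i < n | (i < m)%N) (1 : R) = m%:R.
Proof.
move=> hmn; rewrite -(big_ord_widen _ (fun=> (1:R)) hmn) sumr_const card_ord.
by [].
Qed.

Theorem mainTheorem3 (R : realFieldType) (n : nat) (c : R) (lam : 'I_n -> R)
    (hn : (0 < n)%N) (hc : 0 < c)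
    (hlam01 : forall i, 0 <= lam i <= 1)
    (hsorted : forall i j : 'I_n, (i <= j)%N -> lam i <= lam j) :
  let ws := w_star c lam in
  [/\ in_simplex ws,
      (forall w, in_simplex w -> objective c lam ws <= objective c lam w),
      (forall w, in_simplex w -> objective c lam w <= objective c lam ws -> w = ws) &
      exists beta' : R, forall i,
        ws i = Num.max (beta' - c * dotp ws lam * lam i) 0].
Proof.
pose P := fun k : 'I_n.+1 => (0 < k)%N && m_ok c lam k.
have P1 : P (Ordinal (hn : (1 < n.+1)%N)).
  rewrite /P /=; apply/forallP => j; apply/implyP => /andP[h1 h2].
  by rewrite ltnS leqn0 in h2; rewrite (eqP h2) in h1.
have [hm0 hmn hmok hmax] : [/\ (0 < m_star c lam)%N, (m_star c lam <= n)%N,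
   m_ok c lam (m_star c lam) & forall k, (k <= n)%N -> (0 < k)%N -> m_ok c lam k ->
   (k <= m_star c lam)%N].
  rewrite /m_star (bigop.bigmax_eq_arg (Ordinal (hn : (1 < n.+1)%N)) P1).
  case: arg_maxnP => // k /andP[k0 kok] hk; split => //.
    by rewrite -ltnS.
  move=> k' hk' k'0 k'ok.
  exact: (hk (Ordinal (hk' : (k' < n.+1)%N))) (introT andP (conj k'0 k'ok)).
move=> ws.
set m := m_star c lam in hm0 hmn hmok hmax *.
set s1 := S1 lam m; set s2 := S2 lam m.
set b := beta_star c lam; set a := alpha_star c lam.
have wsE : forall i, ws i = if (i < m)%N then b - a * lam i else 0 by [].
have hbE : b = (1 + c*s2)/(m%:R*(1+c*s2) - c*s1^+2) by [].
have haE : a = c*s1*b/(1+c*s2) by [].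
have s1ge : 0 <= s1 by apply: sumr_ge0 => i _; case/andP: (hlam01 i).
have s2ge : 0 <= s2 by apply: sumr_ge0 => i _; exact: sqr_ge0.
have cs2ge : 0 <= c * s2 by apply: mulr_ge0 => //; exact: ltW.
have q0 : 0 < 1 + c*s2 by lra.
have mpos : 0 < m%:R :> R by rewrite ltr0n.
have cs : s1^+2 <= m%:R * s2.
  set mu := s1 / m%:R.
  have E : \sum_(i < n | (i < m)%N) (lam i - mu)^+2 = s2 - 2*mu*s1 + mu^+2 * m%:R.
    transitivity (\sum_(i < n | (i < m)%N) (lam i ^+2 - (2*mu) * lam i + mu^+2 * 1)).
      by apply: eq_bigr => i _; ring.
    rewrite big_split /= sumrB -!mulr_sumr sum_cnt //.
  have E0 : 0 <= \sum_(i < n | (i < m)%N) (lam i - mu)^+2.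
    by apply: sumr_ge0 => i _; exact: sqr_ge0.
  rewrite E in E0.
  have E2 : m%:R * s2 - s1^+2 = m%:R * (s2 - 2*mu*s1 + mu^+2 * m%:R).
    rewrite /mu; field; exact: lt0r_neq0.
  by rewrite -subr_ge0 E2 mulr_ge0 // ltW.
have Dpos : 0 < m%:R*(1+c*s2) - c*s1^+2.
  have -> : m%:R*(1+c*s2) - c*s1^+2 = m%:R + c*(m%:R*s2 - s1^+2) by ring.
  have : 0 <= c*(m%:R*s2 - s1^+2) by rewrite mulr_ge0 ?subr_ge0 // ltW.
  lra.
have bpos : 0 < b by rewrite hbE divr_gt0.
have age : 0 <= a.
  rewrite haE; apply: divr_ge0; last exact: ltW.
  by apply: mulr_ge0; [apply: mulr_ge0 => //; exact: ltW | exact: ltW].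
have hsum : \sum_(i < n) ws i = 1.
  transitivity (\sum_(i < n | (i < m)%N) (b * 1 - a * lam i)).
    by rewrite [RHS]big_mkcond; apply: eq_bigr => i _; rewrite wsE mulr1.
  rewrite sumrB -!mulr_sumr sum_cnt //.
  change (b * m%:R - a * s1 = 1).
  rewrite haE hbE; field.
  by rewrite !lt0r_neq0.
have hdot : dotp ws lam = b * s1 - a * s2.
  rewrite /dotp.
  transitivity (\sum_(i < n | (i < m)%N) (b * lam i - a * lam i ^+ 2)).
    rewrite [RHS]big_mkcond; apply: eq_bigr => i _; rewrite wsE.
    by case: ifP => _; [ring | rewrite mul0r].
  by rewrite sumrB -!mulr_sumr.
have hcd : c * dotp ws lam = a.
  rewrite hdot haE; field; exact: lt0r_neq0.
have hpos : forall i : 'I_n, (i < m)%N -> a * lam i <= b.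
  move=> i him.
  have jlt : (m.-1 < n)%N by apply: (leq_trans _ hmn); rewrite prednK.
  pose j := Ordinal jlt.
  have mj : m = j.+1 by rewrite /= prednK.
  have Lj : lam i <= lam j by apply: hsorted; rewrite /= -ltnS prednK.
  have rho : lt_rho c lam (lam j) j.
    case: (posnP j) => [j0|jpos].
      rewrite /lt_rho.
      have -> : S1 lam j = 0.
        by rewrite /S1 j0; apply: big_pred0 => k; rewrite ltn0.
      by rewrite eqxx.
    have := hmok; move/forallP/(_ j)/implyP; apply.
    by rewrite jpos mj ltnSn.
  have key : c * s1 * lam j <= 1 + c * s2.
    move: rho; rewrite /lt_rho /s1 /s2 mj /S1 /S2 !sum_step.
    set X := \sum_(i0 < n | (i0 < j)%N) lam i0.
    set Y := \sum_(i0 < n | (i0 < j)%N) lam i0 ^+ 2.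
    have Yge : 0 <= Y by apply: sumr_ge0 => k _; exact: sqr_ge0.
    have cYge : 0 <= c * Y by apply: mulr_ge0 => //; exact: ltW.
    rewrite -subr_ge0.
    have -> : 1 + c * (Y + lam j ^+ 2) - c * (X + lam j) * lam j
        = (1 + c * Y) - c * X * lam j by ring.
    case: ifP => [/eqP X0 _ | X0 hlt].
      by rewrite X0 mulr0 mul0r subr0; lra.
    have Xge : 0 <= X by apply: sumr_ge0 => k _; case/andP: (hlam01 k).
    have cXpos : 0 < c * X by rewrite mulr_gt0 // lt0r X0 Xge.
    rewrite ltr_pdivlMr // in hlt.
    rewrite subr_ge0 [c * X * _]mulrC; exact: ltW.
  have E : a * lam j = b * (c*s1*lam j/(1+c*s2)).
    rewrite haE; field; exact: lt0r_neq0.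
  apply: (le_trans (ler_wpM2l age Lj)).
  rewrite E; apply: ler_piMr; first exact: ltW.
  by rewrite ler_pdivrMr // mul1r.
have hneg : forall i : 'I_n, (m <= i)%N -> b <= a * lam i.
  move=> i hmi.
  have hmn' : (m.+1 <= n)%N by apply: leq_ltn_trans hmi (ltn_ord i).
  have nok : ~~ m_ok c lam m.+1.
    apply/negP => ok; have := hmax _ hmn' (ltn0Sn _) ok.
    by rewrite ltnn.
  move/forallPn: nok => [j]; rewrite negb_imply => /andP[/andP[j0 jm1] nlt].
  have jm : nat_of_ord j = m.
    rewrite ltnS in jm1; apply/eqP; rewrite eqn_leq jm1 /= leqNgt.
    apply/negP => jlt; move: hmok; move/forallP/(_ j)/implyP.
    by rewrite j0 jlt => /(_ isT); rewrite (negbTE nlt).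
  move: nlt; rewrite /lt_rho jm; case: ifP => [_ //|hS1 nlt].
  rewrite -leNgt in nlt.
  have s1pos : 0 < s1 by rewrite lt0r hS1 s1ge.
  have E : b = a * ((1 + c*s2)/(c*s1)).
    rewrite haE; field; rewrite ?lt0r_neq0 // mulr_gt0 //.
  rewrite E; apply: (le_trans (ler_wpM2l age nlt)).
  apply: ler_wpM2l => //; apply: hsorted; by rewrite jm.
pose T w := \sum_(i < n) (ws i + a * lam i) * (w i - ws i).
have key : forall w, in_simplex w ->
  objective c lam w = objective c lam ws + \sum_(i < n) (w i - ws i)^+2
     + c * (dotp w lam - dotp ws lam)^+2 + 2 * T w /\ 0 <= T w.
  move=> w [wge wsum]; split.
    have E1 : \sum_(i < n) w i ^+ 2 = \sum_(i < n) ws i ^+ 2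
        + \sum_(i < n) (w i - ws i)^+2 + 2 * \sum_(i < n) ws i * (w i - ws i).
      rewrite mulr_sumr -!big_split; apply: eq_bigr => i _ /=; ring.
    have TE : T w = \sum_(i < n) ws i * (w i - ws i) + a * (dotp w lam - dotp ws lam).
      rewrite /dotp -sumrB mulr_sumr -big_split; apply: eq_bigr => i _ /=; ring.
    rewrite /objective E1 TE -hcd; ring.
  have TE : T w = b * (\sum_(i < n) w i - \sum_(i < n) ws i)
     + \sum_(i < n) (ws i + a * lam i - b) * (w i - ws i).
    rewrite -sumrB mulr_sumr -big_split; apply: eq_bigr => i _ /=; ring.
  rewrite TE wsum hsum subrr mulr0 add0r.
  apply: sumr_ge0 => i _; rewrite wsE; case: ifP => h.
    have -> : b - a * lam i + a * lam i - b = 0 by ring.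
    by rewrite mul0r.
  rewrite add0r subr0 mulr_ge0 // subr_ge0; apply: hneg.
  by rewrite leqNgt h.
split.
- split => [i|//]; rewrite wsE; case: ifP => h //.
  by rewrite subr_ge0 hpos.
- move=> w hw; have [-> T0] := key w hw.
  have A1 : 0 <= \sum_(i < n) (w i - ws i)^+2.
    by apply: sumr_ge0 => i _; exact: sqr_ge0.
  have A2 : 0 <= c * (dotp w lam - dotp ws lam)^+2.
    by apply: mulr_ge0; [exact: ltW | exact: sqr_ge0].
  lra.
- move=> w hw; have [E T0] := key w hw; rewrite E => hle.
  have A1 : 0 <= \sum_(i < n) (w i - ws i)^+2.
    by apply: sumr_ge0 => i _; exact: sqr_ge0.
  have A2 : 0 <= c * (dotp w lam - dotp ws lam)^+2.
    by apply: mulr_ge0; [exact: ltW | exact: sqr_ge0].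
  have S0 : \sum_(i < n) (w i - ws i)^+2 = 0 by apply/eqP; rewrite eq_le A1 andbT; lra.
  apply: functional_extensionality => i.
  have := @psumr_eq0P _ _ xpredT (fun i => (w i - ws i)^+2) (fun i _ => sqr_ge0 _) S0 i isT.
  by move/eqP; rewrite sqrf_eq0 subr_eq0 => /eqP.
- exists b => i; rewrite hcd wsE; case: ifP => h.
    by rewrite max_l // subr_ge0 hpos.
  by rewrite max_r // subr_le0 hneg // leqNgt h.
Qed.
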